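(* If $G$ is a connected indecomposable graph on $[n]$ with $\operatorname{pv}(G)>0$, then $\operatorname{pv}(G)-\alpha(G)>0$.
   Context: A pendant vertex is a vertex of degree one; $\operatorname{pv}(G)$ is the number of pendant vertices of $G$. For $v\in V(G)$, $\operatorname{cdeg}_G(v)$ is the number of maximal cliques of $G$ containing $v$ and $\operatorname{pdeg}_G(v)$ is the number of pendant vertices adjacent to $v$. A vertex $v$ with $\operatorname{pdeg}_G(v)\ge1$ is of type 1 if $\operatorname{cdeg}_G(v)=\operatorname{pdeg}_G(v)+1$ (and of type 2 if $\operatorname{cdeg}_G(v)\ge\operatorname{pdeg}_G(v)+2$); $\alpha(G)$ is the number of type 1 vertices. A vertex is free if it belongs to exactly one maximal clique. $G$ is decomposable if $G=G_1\cup G_2$ with $V(G_1)\cap V(G_2)=\{v\}$, $v$ free in both $G_1$ and $G_2$; otherwise indecomposable. *)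

(* Defs.v *)
From mathcomp Require Import all_boot.
Set Implicit Arguments. Unset Strict Implicit. Unset Printing Implicit Defensive.

Section Graphs.
Variable n : nat.
Variable e : rel 'I_n.

Definition simple_graph : Prop := symmetric e /\ irreflexive e.

Definition connected_graph : Prop := forall x y : 'I_n, connect e x y.

Definition clique_in (S C : {set 'I_n}) : bool :=
  (C \subset S) && [forall x in C, forall y in C, (x != y) ==> e x y].

Definition maxclique_in (S C : {set 'I_n}) : bool :=
  clique_in S C && [forall D : {set 'I_n}, (clique_in S D && (C \subset D)) ==> (D == C)].

Definition cdeg_in (S : {set 'I_n}) (v : 'I_n) : nat :=
  #|[set C : {set 'I_n} | maxclique_in S C & v \in C]|.

Definition cdeg (v : 'I_n) : nat := cdeg_in setT v.

Definition free_in (S : {set 'I_n}) (v : 'I_n) : bool := cdeg_in S v == 1.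

Definition deg (v : 'I_n) : nat := #|[set u | e v u]|.

Definition pendant (v : 'I_n) : bool := deg v == 1.

Definition pv : nat := #|[set v | pendant v]|.

Definition pdeg (v : 'I_n) : nat := #|[set u | e v u & pendant u]|.

Definition type1 (v : 'I_n) : bool := (1 <= pdeg v) && (cdeg v == (pdeg v).+1).

Definition alpha : nat := #|[set v | type1 v]|.

(* G = G1 ∪ G2 with V(G1) ∩ V(G2) = {v}, v free in G1 and G2; G1, G2 nontrivial.
   Since the vertex sets meet only in v, every edge of G lies in G1 or G2 and
   G1 = G[V1], G2 = G[V2]. *)
Definition decomposable : Prop :=
  exists (V1 V2 : {set 'I_n}) (v : 'I_n),
    [/\ V1 :|: V2 = setT, V1 :&: V2 = [set v],
        (1 < #|V1|) && (1 < #|V2|),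
        (forall x y, e x y -> ((x \in V1) && (y \in V1)) || ((x \in V2) && (y \in V2)))
      & free_in V1 v && free_in V2 v].

Definition indecomposable : Prop := ~ decomposable.

End Graphs.

(* Main.v *)
Require Import Defs.
From mathcomp Require Import all_boot zify.
Set Implicit Arguments. Unset Strict Implicit. Unset Printing Implicit Defensive.

Section S.
Variable n : nat.
Variable e : rel 'I_n.
Lemma cliqueP (S C : {set 'I_n}) : reflect (C \subset S /\ forall x y, x \in C -> y \in C -> x != y -> e x y)
  (clique_in e S C).
Proof.
apply: (iffP andP) => [[sCS /forallP H]|[sCS H]]; split => //.
  by move=> x y xC yC nxy; move: (H x); rewrite xC /= => /forallP/(_ y); rewrite yC nxy.
by apply/forallP => x; apply/implyP => xC; apply/forallP => y; apply/implyP => yC;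
  apply/implyP; exact: H.
Qed.

Lemma maxclique_max (S C D : {set 'I_n}) : maxclique_in e S C -> clique_in e S D -> C \subset D -> D = C.
Proof.
by case/andP => _ /forallP/(_ D) => H cD sCD; apply/eqP; move: H; rewrite cD sCD.
Qed.

Lemma maxcliqueI (S C : {set 'I_n}) : clique_in e S C ->
  (forall D, clique_in e S D -> C \subset D -> D = C) -> maxclique_in e S C.
Proof.
move=> cC H; rewrite /maxclique_in cC /=; apply/forallP => D; apply/implyP => /andP[cD sCD].
by rewrite (H D cD sCD).
Qed.

Lemma maxclique_clique (S C : {set 'I_n}) : maxclique_in e S C -> clique_in e S C.
Proof. by case/andP. Qed.

Lemma clique_mono (S S' D : {set 'I_n}) : S \subset S' -> clique_in e S D -> clique_in e S' D.
Proof.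
move=> sSS' /cliqueP[sDS H]; apply/cliqueP; split => //; exact: subset_trans sSS'.
Qed.

Lemma uniq_max (S A : {set 'I_n}) v : clique_in e S A -> v \in A ->
  (forall D, clique_in e S D -> v \in D -> D \subset A) ->
  [set C | maxclique_in e S C & v \in C] = [set A].
Proof.
move=> cA vA H.
have mA : maxclique_in e S A.
  apply: maxcliqueI => // D cD sAD; apply/eqP; rewrite eqEsubset sAD andbT.
  by apply: H => //; exact: (subsetP sAD).
apply/setP => C; rewrite !inE; apply/andP/eqP => [[mC vC]|->]; last by [].
by apply/esym; apply: maxclique_max mC cA (H C (maxclique_clique mC) vC).
Qed.

Lemma ext_max (S D0 : {set 'I_n}) : clique_in e S D0 -> exists D, maxclique_in e S D && (D0 \subset D).
Proof.
move=> cD0.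
case: (@arg_maxnP _ D0 (fun D => clique_in e S D && (D0 \subset D)) (fun D => #|D|)).
  by rewrite cD0 subxx.
move=> D /andP[cD sD0D] Hmax; exists D; rewrite sD0D andbT.
apply: maxcliqueI => // D' cD' sDD'.
apply/eqP; rewrite eq_sym eqEcard sDD' /=.
by apply: Hmax; rewrite cD' (subset_trans sD0D sDD').
Qed.

Lemma key (u v : 'I_n) : simple_graph e -> e v u -> pendant e u -> cdeg e v = 2 ->
  decomposable e.
Proof.
move=> [esym irr] evu pu cdv.
have Nu : forall x, e u x -> x = v.
  move: pu; rewrite /pendant /deg => /cards1P [w Hw] x eux.
  have : x \in [set w] by rewrite -Hw inE.
  have : v \in [set w] by rewrite -Hw inE esym.
  by rewrite !inE => /eqP -> /eqP ->.
have uv : u != v by apply/eqP => Euv; move: (irr v); rewrite -{2}Euv evu.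
set A := [set u; v].
have cAS : forall S : {set 'I_n}, A \subset S -> clique_in e S A.
  move=> S sAS; apply/cliqueP; split => // x y; rewrite !inE.
  move=> /orP[]/eqP-> /orP[]/eqP->; rewrite ?eqxx //.
  by rewrite esym.
have cuA : forall D : {set 'I_n}, clique_in e setT D -> u \in D -> D \subset A.
  move=> D /cliqueP[_ H] uD; apply/subsetP => x xD; rewrite !inE.
  case: (eqVneq x u) => [//|nxu].
  by rewrite (Nu x (H u x uD xD _)) ?eqxx ?orbT // eq_sym.
have mA : maxclique_in e setT A.
  apply: maxcliqueI; first exact: cAS (subsetT _).
  move=> D cD sAD; apply/eqP; rewrite eqEsubset sAD andbT.
  by apply: cuA cD _; apply: (subsetP sAD); rewrite !inE eqxx.
set M := [set C | maxclique_in e setT C & v \in C].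
have AM : A \in M by rewrite inE mA !inE eqxx orbT.
have : #|M :\ A| == 1.
  have := cardsD1 A M; rewrite AM.
  have -> : #|M| = 2 by exact: cdv.
  by move=> /eqP; rewrite eqSS => /eqP <-.
case/cards1P => C HC.
have CM : C \in M :\ A by rewrite HC inE.
move: (CM); rewrite !inE => /andP[CA /andP[mC vC]].
have uC : u \notin C.
  apply/negP => uC; move/negP: CA; apply; apply/eqP; symmetry.
  by apply: maxclique_max mC (cAS _ (subsetT _)) (cuA C (maxclique_clique mC) uC).
have claim : forall D : {set 'I_n}, clique_in e setT D -> v \in D -> u \notin D -> D \subset C.
  move=> D cD vD uD; case: (ext_max cD) => D' /andP[mD' sDD'].
  case: (eqVneq D' A) => [EA|NA].
    apply/subsetP => x xD; move: (subsetP sDD' x xD); rewrite EA !inE.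
    case/orP => /eqP Ex; first by move: uD; rewrite -Ex xD.
    by rewrite Ex.
  have : D' \in M :\ A by rewrite !inE NA mD' (subsetP sDD').
  by rewrite HC inE => /eqP <-.
have [w wC wv] : exists2 w, w \in C & w != v.
  case: (pickP [pred x in C | x != v]) => [w /andP[]|H]; first by exists w.
  move/negP: CA; case; apply/eqP; symmetry.
  apply: maxclique_max mC (cAS _ (subsetT _)) _.
  apply/subsetP => x xC; move: (H x); rewrite /= xC /= => /negbFE xv; by rewrite !inE xv orbT.
have wu : w != u by apply: contraNneq uC => <-.
rewrite /decomposable; exists A, [set~ u], v; split.
- by apply/setP => x; rewrite !inE; case: (x == u); rewrite ?orbT.
- apply/setP => x; rewrite !inE; case: (eqVneq x u) => [->|_] /=; last by rewrite andbT.
  by rewrite (negbTE uv).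
- apply/andP; split; first by rewrite cards2 uv.
  apply: (@leq_trans #|[set v; w]|); first by rewrite cards2 eq_sym wv.
  apply: subset_leq_card; apply/subsetP => x; rewrite !inE.
  by case/orP => /eqP ->; rewrite ?wu // eq_sym.
- move=> x y exy; rewrite !inE.
  case: (eqVneq x u) => [Ex|nxu].
    by move: exy; rewrite Ex => /Nu ->; rewrite eqxx orbT.
  case: (eqVneq y u) => [Ey|nyu]; last by rewrite orbT.
  by rewrite (Nu x _) ?eqxx ?orbT // esym -Ey.
- apply/andP; split; rewrite /free_in /cdeg_in.
    rewrite (@uniq_max A A v) ?cards1 //; first exact: cAS.
      by rewrite !inE eqxx orbT.
    by move=> D /cliqueP[].
  rewrite (@uniq_max _ C v) ?cards1 //.
    move/cliqueP: (maxclique_clique mC) => [_ H]; apply/cliqueP; split => //.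
    by apply/subsetP => x xC; rewrite !inE; apply: contraNneq uC => <-.
  move=> D cD vD; apply: claim => //; first exact: clique_mono (subsetT _) cD.
  move/cliqueP: cD => [sD _]; apply/negP => uD; move: (subsetP sD u uD).
  by rewrite !inE eqxx.
Qed.
Lemma count_pdeg (esym : symmetric e) (T : {set 'I_n}) : \sum_(v in T) pdeg e v <= pv e.
Proof.
rewrite [X in _ <= X](_ : _ = \sum_(u : 'I_n) (pendant e u : nat)); last first.
  by rewrite /pv -sum1dep_card big_mkcond.
apply: (@leq_trans (\sum_(v : 'I_n) pdeg e v)).
  by rewrite [X in _ <= X](bigID (mem T)) /= leq_addr.
rewrite /pdeg.
under eq_bigr => v _ do rewrite -sum1dep_card big_mkcond /=.
rewrite exchange_big /=; apply: leq_sum => u _.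
case pu: (pendant e u); last first.
  by rewrite big1 // => v _; rewrite andbF.
rewrite -big_mkcond /= sum1dep_card.
move/eqP: pu; rewrite /deg => <-.
by apply: subset_leq_card; apply/subsetP => v; rewrite !inE esym andbT.
Qed.
End S.

Theorem lemma4p3 (n : nat) (e : rel 'I_n) :
  simple_graph e -> connected_graph e -> indecomposable e ->
  0 < pv e -> 0 < pv e - alpha e.
Proof.
move=> sg _ ind ppv.
have H2 : forall v, type1 e v -> 2 <= pdeg e v.
  move=> v /andP[p1 /eqP cd]; rewrite ltn_neqAle eq_sym p1 andbT.
  apply/negP => /eqP p1'; apply: ind.
  move: p1; rewrite /pdeg card_gt0 => /set0Pn [u]; rewrite inE => /andP[evu pu].
  by apply: (key sg evu pu); rewrite cd p1'.
have := count_pdeg sg.1 [set v | type1 e v].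
have : 2 * alpha e <= \sum_(v in [set v | type1 e v]) pdeg e v.
  rewrite /alpha mulnC -sum_nat_const; apply: leq_sum => v; rewrite inE; exact: H2.
move=> h1 h2; move: (leq_trans h1 h2) ppv; clear; lia.
Qed.
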